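(* Let $n$ and $\ell$ be positive integers with $\ell$ odd such that $\Omega_\ell(n)$ is a powerful number. If $p\in P(n)$, then $\gcd(p(p-1),\ell)>1$.
   Context: A positive integer $a$ is called a powerful number if for every prime $p$, $p\mid a$ implies $p^2\mid a$. $\Omega_\ell(n)=\prod_{a=1}^{n}(a^\ell+1)$. For a positive integer $n$, $P(n)$ denotes the set of primes $p$ with $\frac{n+1}{2}<p\le n+1$. *)

(* Defs.v *)
From mathcomp Require Import all_boot.
Set Implicit Arguments. Unset Strict Implicit. Unset Printing Implicit Defensive.

Definition powerful (a : nat) : Prop :=
  0 < a /\ forall p : nat, prime p -> p %| a -> p ^ 2 %| a.

Definition Omega (l n : nat) : nat := \prod_(1 <= a < n.+1) (a ^ l + 1).

(* P(n) = primes p with (n+1)/2 < p <= n+1, i.e. n+1 < 2p <= 2(n+1) *)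
Definition inP (n p : nat) : Prop := prime p /\ n.+1 < 2 * p /\ p <= n.+1.

(* Main.v *)
Require Import Defs.
From mathcomp Require Import all_boot.
From mathcomp Require Import all_algebra ring zify.

Section IntPart.
Import GRing.Theory.
Local Open Scope ring_scope.

Lemma key_int (x : int) (m : nat) : exists k : int,
  x ^+ (2 * m + 1) + 1 - (2 * m + 1)%:R * (x+1) = k * (x+1)^+2.
Proof.
elim: m => [|m [k IH]]; first by exists 0; rewrite muln0 add0n expr1; ring.
exists (x^+2 * k + ((2 * m + 1)%:R * (x+1) - (4 * m + 3)%:R)).
have -> : (2 * m.+1 + 1 = (2 * m + 1) + 2)%N by lia.
rewrite exprD.
have E : x ^+ (2 * m + 1) = k * (x+1)^+2 - 1 + (2 * m + 1)%:R * (x+1)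
  by rewrite -IH; ring.
rewrite E !natrD ?natrM. ring.
Qed.

Lemma key_nat (p l : nat) : (0 < p)%N -> odd l ->
  (p ^ 2 %| (p - 1) ^ l + 1)%N -> (p %| l)%N.
Proof.
move=> p0 ol /dvdnP [q Hq].
have El : l = (2 * l./2 + 1)%N.
  by rewrite -{1}(odd_double_half l) ol addnC -mul2n.
have [k Hk] := key_int (Posz (p - 1)) l./2.
rewrite -El in Hk.
have Ep : Posz (p - 1) + 1 = Posz p by rewrite -PoszD subnK.
rewrite Ep in Hk.
have HN : Posz (p - 1) ^+ l + 1 = Posz q * (Posz p) ^+ 2.
  have := congr1 Posz Hq; rewrite PoszD PoszM -!natz !natrX => ->.
  by rewrite natz.
rewrite HN in Hk.
have Hl : Posz l * Posz p = ((Posz q - k) * Posz p) * Posz p.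
  have -> : Posz l = (l%:R : int) by rewrite natz.
  suff: (l%:R : int) * Posz p = Posz q * (Posz p)^+2 - k * (Posz p)^+2.
    by move=> ->; ring.
  by rewrite -Hk; ring.
have pn0 : Posz p != 0 by rewrite -lt0n.
have Hl2 : Posz l = (Posz q - k) * Posz p := mulIf pn0 Hl.
have : (Posz p %| Posz l)%Z by apply/dvdzP; exists (Posz q - k).
by rewrite dvdzE.
Qed.

Lemma key_nat1 (p l : nat) : (0 < p)%N -> odd l ->
  (p %| (p - 1) ^ l + 1)%N.
Proof.
move=> p0 ol.
have El : l = (2 * l./2 + 1)%N.
  by rewrite -{1}(odd_double_half l) ol addnC -mul2n.
have [k Hk] := key_int (Posz (p - 1)) l./2.
rewrite -El in Hk.
have Ep : Posz (p - 1) + 1 = Posz p by rewrite -PoszD subnK.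
rewrite Ep in Hk.
have : (Posz p %| Posz ((p - 1) ^ l + 1))%Z.
  apply/dvdzP; exists (Posz l + k * Posz p).
  rewrite PoszD -!natz natrX.
  have -> : (((p - 1)%N)%:R : int) ^+ l + 1 = k * Posz p ^+ 2 + l%:R * Posz p.
    by rewrite -Hk natz; ring.
  by rewrite natz; ring.
by rewrite dvdzE.
Qed.

End IntPart.

Lemma fermat_gen a p k : prime p -> a ^ (1 + k * (p - 1)) = a %[mod p].
Proof.
move=> pp; have p0 := prime_gt0 pp.
elim: k => [|k IH]; first by rewrite mul0n addn0 expn1.
have -> : 1 + k.+1 * (p - 1) = (1 + k * (p - 1)) + (p - 1) by rewrite mulSn; lia.
rewrite expnD -modnMml IH modnMml -expnS subn1 prednK //.
by rewrite fermat_little.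
Qed.

Lemma inj_pow a b p l : prime p -> coprime l (p - 1) -> 0 < l ->
  a ^ l = b ^ l %[mod p] -> a = b %[mod p].
Proof.
move=> pp cop l0 H.
case: (egcdnP (p - 1) l0) => km kn Hb _.
move: cop; rewrite /coprime => /eqP g1; rewrite g1 in Hb.
rewrite -(fermat_gen a p kn pp) -(fermat_gen b p kn pp).
have -> : 1 + kn * (p - 1) = l * km by lia.
by rewrite !expnM -modnXm H modnXm.
Qed.

Theorem lemma2 (n l : nat) (hn : 0 < n) (hl : 0 < l) (hodd : odd l)
  (hpow : powerful (Omega l n)) (p : nat) (hp : inP n p) :
  1 < gcdn (p * (p - 1)) l.
Proof.
case: hp => pp [h2p hpn].
have p2 := prime_gt1 pp.
rewrite ltnNge; apply/negP => hg.
have cop : coprime (p * (p - 1)) l.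
  rewrite /coprime eqn_leq hg /= gcdn_gt0 hl orbT //.
move: cop; rewrite coprimeMl => /andP [cpl cp1l].
have cl1 : coprime l (p - 1) by rewrite coprime_sym.
set x := p - 1.
set f := fun a => a ^ l + 1.
have other : forall a, 0 < a <= n -> a != x -> coprime p (f a).
  move=> a /andP [a0 an] ax; rewrite prime_coprime //; apply/negP => da.
  have H1 : a ^ l + 1 = x ^ l + 1 %[mod p].
    have hx : (p %| x ^ l + 1) by apply: key_nat1 => //; lia.
    rewrite /f in da.
    by rewrite (eqP da) (eqP hx).
  have H2 : a = x %[mod p].
    apply: (@inj_pow a x p l pp cl1 hl); apply/eqP; rewrite -(eqn_modDr 1); exact/eqP.
  have xp : x %% p = x by rewrite modn_small /x //; lia.
  rewrite xp in H2.
  case: (ltnP a p) => ap.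
    by rewrite modn_small // in H2; move/eqP: ax; apply.
  have : (a - p) %% p = x by rewrite -H2 -{2}(subnK ap) modnDr.
  rewrite modn_small; last by lia.
  move=> E; lia.
have hdx : p %| f x by apply: key_nat1 => //; lia.
have Hsplit : Omega l n =
    (\prod_(1 <= a < x) f a) * (f x * \prod_(x.+1 <= a < n.+1) f a).
  rewrite /Omega (@big_cat_nat _ _ _ x); [|rewrite /x; lia|rewrite /x; lia].
  rewrite (@big_ltn _ _ _ x) //; rewrite /x; lia.
have cA : coprime p (\prod_(1 <= a < x) f a).
  rewrite big_nat_cond; apply: (big_ind (fun y => coprime p y)) => [|u v cu cv|i /andP [/andP [i1 ix] _]].
  - exact: coprimen1.
  - by rewrite coprimeMr cu cv.
  - apply: other; first (apply/andP; split; rewrite /x in ix; lia).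
    by rewrite neq_ltn ix.
have cB : coprime p (\prod_(x.+1 <= a < n.+1) f a).
  rewrite big_nat_cond; apply: (big_ind (fun y => coprime p y)) => [|u v cu cv|i /andP [/andP [i1 ix] _]].
  - exact: coprimen1.
  - by rewrite coprimeMr cu cv.
  - apply: other; first (apply/andP; split; rewrite /x in i1; lia).
    by rewrite neq_ltn i1 orbT.
have pO : p %| Omega l n.
  by rewrite Hsplit; apply: dvdn_mull; apply: dvdn_mulr.
have p2d := hpow.2 p pp pO.
rewrite Hsplit Gauss_dvdr ?coprimeXl // Gauss_dvdl ?coprimeXl // in p2d.
have pl : p %| l by apply: key_nat => //; lia.
by move: cpl; rewrite prime_coprime // pl.
Qed.
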